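(* Fix $d\ge3$, let $C$ be an indeterminate, and let $\phi_{(d,C)}(x)=x^d-Cdx^{d-1}+C(d-1)\in\mathbb{Z}[C][x]$. For every $n\ge1$, all roots in $\overline{\mathbb{Q}}$ of the polynomial $\phi_{(C,n)}(0):=\phi_{(d,C)}^n(0)\in\mathbb{Z}[C]$ are simple.
   Context: $\phi^n$ denotes the $n$-fold iterate in the variable $x$. *)

(* Defs.v *)
From mathcomp Require Import all_boot all_order all_algebra all_field.
Set Implicit Arguments. Unset Strict Implicit. Unset Printing Implicit Defensive.
Import GRing.Theory Num.Theory.
Local Open Scope ring_scope.

(* The variable C is 'X : {poly int}; polynomials in x over Z[C] are
   {poly {poly int}}. *)
Definition phiC (d : nat) : {poly {poly int}} :=
  'X^d - (('X : {poly int}) *+ d)%:P * 'X^(d.-1)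
       + (('X : {poly int}) *+ (d.-1))%:P.

Definition phiCn (d n : nat) : {poly int} :=
  iter n (fun x : {poly int} => (phiC d).[x]) 0.

(* Main.v *)
Require Import Defs.
From mathcomp Require Import all_boot all_order all_algebra all_field ring zify.
Import GRing.Theory Num.Theory.
Local Open Scope ring_scope.
Lemma scale_Aint (p : {poly int}) (z : algC) :
  p != 0 -> root (map_poly intr p) z -> (lead_coef p)%:~R * z \in Aint.
Proof.
move=> p0 rz.
set m := (size p).-1; set L := lead_coef p.
have Lnz : L != 0 by rewrite lead_coef_eq0.
have sp : size p = m.+1 by rewrite /m prednK // size_poly_gt0.
have m_gt0 : (0 < m)%N.
  rewrite lt0n; apply/negP => /eqP m0.
  have /size1_polyC pC : (size p <= 1)%N by rewrite sp m0.
  move: rz Lnz; rewrite /L pC map_polyC /= rootC intr_eq0 lead_coefC.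
  by move=> ->.
pose c i : int := if i == m then 1 else p`_i * L ^+ (m.-1 - i).
pose M : {poly algC} := \poly_(i < m.+1) (c i)%:~R.
have Mm : M`_m = 1 by rewrite coef_poly ltnSn /c eqxx.
apply: (@root_monic_Aint M).
- have hp : (map_poly intr p).[z] = \sum_(i < m.+1) (p`_i)%:~R * z ^+ i.
    rewrite (@horner_coef_wide _ m.+1); last by rewrite size_map_inj_poly ?sp //; exact: intr_inj.
    by apply: eq_bigr => i _; rewrite coef_map.
  move: rz; rewrite /root hp horner_poly => /eqP s0; apply/eqP.
  suff -> : \sum_(i < m.+1) (c i)%:~R * ((L%:~R * z) ^+ i) =
            (L%:~R) ^+ m.-1 * \sum_(i < m.+1) (p`_i)%:~R * z ^+ i :> algC.
    by rewrite s0 mulr0.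
  rewrite !big_ord_recr /= mulrDr; congr (_ + _).
    rewrite mulr_sumr; apply: eq_bigr => i _.
    rewrite /c (ltn_eqF (ltn_ord i)) rmorphM rmorphXn /= exprMn.
    have hi : (i <= m.-1)%N by rewrite -ltnS prednK.
    rewrite -[in RHS](subnK hi) exprD.
    ring.
  rewrite /c eqxx mul1r exprMn.
  have -> : p`_m = L by rewrite /L lead_coefE -/m.
  by rewrite mulrA -exprSr prednK.
- by rewrite monicE lead_coef_poly //= /c eqxx ?oner_eq0.
- apply/polyOverP => i; rewrite coef_poly; case: ifP => _; last exact: rpred0.
  exact: rpred_int.
Qed.

Lemma phiCn_S d n : phiCn d n.+1 =
  (phiCn d n) ^+ d - ('X *+ d) * (phiCn d n) ^+ d.-1 + 'X *+ d.-1.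
Proof. by rewrite /phiCn iterS /phiC !hornerE. Qed.

Lemma deriv_phiCn d n : (0 < d)%N ->
  exists Q : {poly int}, (phiCn d n.+1)^`() = Q *+ d - 1.
Proof.
case: d => [//|k] _; rewrite phiCn_S /=.
set x := phiCn k.+1 n.
exists (x^`() * x ^+ k - x ^+ k - 'X * (x^`() * x ^+ k.-1 *+ k) + 1).
rewrite !derivE !deriv_exp /=.
clearbody x; move: (x^`() * x ^+ k) (x ^+ k) (x^`() * x ^+ k.-1 *+ k) => A B E.
ring.
Qed.
Lemma size_Xn (k : nat) : (size (('X : {poly int}) *+ k) <= 2)%N.
Proof. by rewrite -scaler_nat (leq_trans (size_scale_leq _ _)) // size_polyX. Qed.

Lemma lead_step d (P : {poly int}) : (3 <= d)%N -> (2 < size P)%N ->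
  size (P^+d - ('X *+ d) * P^+d.-1 + 'X *+ d.-1) = ((size P).-1 * d).+1 /\
  lead_coef (P^+d - ('X *+ d) * P^+d.-1 + 'X *+ d.-1) = lead_coef P ^+ d.
Proof.
move=> d3 sP.
have P0 : P != 0 by rewrite -size_poly_gt0 (ltn_trans _ sP).
have sPd : size (P ^+ d) = ((size P).-1 * d).+1.
  rewrite -(size_exp P d) prednK // size_poly_gt0 expf_neq0 //.
set e := (size P).-1 in sPd *.
have e2 : (1 < e)%N by rewrite /e -ltnS prednK // (ltn_trans _ sP).
have h1 : (size ('X *+ d * P ^+ d.-1)%R <= (e * d.-1).+2)%N.
  have := @size_polyMleq _ ('X *+ d) (P ^+ d.-1).
  have := size_poly_exp_leq P d.-1.
  have := size_Xn d. rewrite -/e. lia.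
have h2 := size_Xn d.-1.
have sR : (size (- ('X *+ d * P ^+ d.-1) + 'X *+ d.-1)%R < size (P ^+ d))%N.
  have := @size_polyD _ (- ('X *+ d * P ^+ d.-1)) ('X *+ d.-1).
  have ed : (e * d.-1 + e = e * d)%N by rewrite -mulnSr prednK // (ltn_trans _ d3).
  rewrite size_polyN sPd => h; apply: (leq_ltn_trans h); rewrite gtn_max; apply/andP; split; [apply: (leq_ltn_trans h1) | apply: (leq_ltn_trans h2)]; lia.
rewrite -addrA size_polyDl // lead_coefDl // lead_coef_exp //.
Qed.

Lemma phiCn_1 d : (1 < d)%N -> phiCn d 1 = 'X *+ d.-1.
Proof.
move=> d1; rewrite phiCn_S /phiCn /= !expr0n.
rewrite (gtn_eqF (ltnW d1)) -subn1 subn_eq0 leqNgt d1 /=.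
by rewrite mulr0 subrr add0r.
Qed.

Lemma phiCn_2 k : (1 < k)%N ->
  phiCn k.+1 2 = (- (k%:R ^+ k))%:P * 'X^(k.+1) + 'X *+ k.
Proof.
move=> k1; rewrite phiCn_S phiCn_1 ?ltnS ?(ltnW k1) //=.
have hX m : ('X : {poly int}) *+ m = m%:R * 'X by rewrite mulr_natl.
rewrite !hX !exprMn polyCN rmorphXn /= !exprS.
have -> : (k%:R : int)%:P = k%:R by rewrite polyC_natr.
move: ('X ^+ k : {poly int}) (k%:R ^+ k : {poly int}) => A B.
ring.
Qed.

Lemma phiCn_lead d n : (3 <= d)%N -> (2 <= n)%N ->
  (2 < size (phiCn d n))%N /\ coprime `|lead_coef (phiCn d n)| d.
Proof.
move=> d3; elim: n => [//|n IH] n2.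
case: (leqP 2 n) => hn.
  have [s c] := IH hn; rewrite phiCn_S; have [-> ->] := @lead_step d _ d3 s.
  split; last by rewrite abszX coprimeXl.
  have : (2 <= (size (phiCn d n)).-1)%N by rewrite -ltnS prednK // (ltn_trans _ s).
  move: ((size (phiCn d n)).-1) => e he; nia.
have -> : n = 1%N by lia.
clear IH n2 hn.
case: d d3 => [//|k] d3.
have k1 : (1 < k)%N by [].
have k0 : (- (k%:R ^+ k) : int) != 0 by rewrite oppr_eq0 expf_neq0 // pnatr_eq0 -lt0n ltnW.
have sA : size ((- (k%:R ^+ k))%:P * 'X^(k.+1) : {poly int}) = k.+2.
  by rewrite size_Cmul // size_polyXn.
have sB : (size (('X : {poly int}) *+ k)%R < k.+2)%N.
  apply: (leq_ltn_trans (size_Xn k)); lia.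
rewrite phiCn_2 // size_polyDl ?sA // lead_coefDl ?sA //.
rewrite mul_polyC lead_coefZ lead_coefXn mulr1 abszN abszX natz absz_nat.
split; first by lia.
by rewrite coprimeXl // coprimenS.
Qed.

Lemma scale_poly_Aint (q : {poly int}) (L : int) (z : algC) :
  L%:~R * z \in Aint -> L%:~R ^+ size q * (map_poly intr q).[z] \in Aint.
Proof.
move=> hz.
rewrite (@horner_coef_wide _ (size q)); last first.
  by rewrite size_map_inj_poly //; exact: intr_inj.
rewrite mulr_sumr; apply: rpred_sum => i _.
rewrite coef_map /=.
have hi : (i <= size q)%N by apply: ltnW.
rewrite -[in L%:~R ^+ size q](subnK hi) exprD.
have -> : L%:~R ^+ (size q - i) * L%:~R ^+ i * ((q`_i)%:~R * z ^+ i) =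
          (q`_i)%:~R * L%:~R ^+ (size q - i) * (L%:~R * z) ^+ i :> algC.
  rewrite exprMn; ring.
by rewrite !rpredM ?rpredX ?Aint_int.
Qed.

Lemma mup1 (p : {poly algC}) z : p != 0 -> root p z -> ~~ root p^`() z -> mup z p = 1%N.
Proof.
move=> p0 rz rd; apply/eqP; rewrite eqn_leq mup_leq // mup_geq // expr1 dvdp_XsubCl rz andbT.
apply/negP => /dvdpP [r hr]; move: rd; rewrite hr !derivE.
have -> : r^`() * ('X - z%:P) ^+ 2 + r * (1 * ('X - z%:P) + ('X - z%:P) * 1) =
  ('X - z%:P) * (r^`() * ('X - z%:P) + r *+ 2) by ring.
by rewrite rootM root_XsubC eqxx.
Qed.

Lemma lead_all d n : (3 <= d)%N -> (1 <= n)%N ->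
  phiCn d n != 0 /\ coprime `|lead_coef (phiCn d n)| d.
Proof.
move=> d3 n1; case: (leqP 2 n) => hn.
  have [s c] := @phiCn_lead d n d3 hn; split => //.
  by rewrite -size_poly_gt0 (ltn_trans _ s).
have -> : n = 1%N by lia.
rewrite phiCn_1; last by lia.
rewrite -scaler_nat lead_coefZ lead_coefX mulr1 natz absz_nat.
split; last first.
  by case: d d3 => // k _; rewrite coprimenS.
rewrite -size_poly_gt0 size_scale ?size_polyX // -[_ == 0]/(d.-1 == 0)%N; lia.
Qed.

Theorem lemma5p2 (d n : nat) :
  (3 <= d)%N -> (1 <= n)%N ->
  forall z : algC,
    root (map_poly intr (phiCn d n)) z -> mup z (map_poly intr (phiCn d n)) = 1%N.
Proof.
move=> d3 n1 z rz; case: n n1 rz => // m _ rz.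
have [P0 cop] := @lead_all d m.+1 d3 isT.
have PC0 : map_poly intr (phiCn d m.+1) != 0 :> {poly algC}.
  by rewrite map_poly_eq0_id0 // intr_eq0 lead_coef_eq0.
apply: mup1 => //; apply/negP => rd.
have [Q hQ] := @deriv_phiCn d m (ltnW (ltnW d3)).
move: rd; rewrite deriv_map hQ rmorphB rmorphMn rmorph1 /= /root !hornerE subr_eq0.
move=> /eqP hQz.
have hb := @scale_Aint _ _ P0 rz.
have hw := @scale_poly_Aint Q _ _ hb.
set w := _ * _ in hw.
have wd : w * d%:R = (lead_coef (phiCn d m.+1))%:~R ^+ size Q.
  by rewrite /w -mulrA mulr_natr -hornerMn hQz mulr1.
move: cop wd hw; clearbody w; move: (lead_coef (phiCn d m.+1)) (size Q) => a s cop wd hw.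
have d0 : (d%:R : algC) != 0 by rewrite pnatr_eq0; lia.
have wq : w \in Crat.
  apply/CratP; exists ((a ^+ s)%:~R / d%:R).
  by rewrite fmorph_div rmorph_int rmorph_nat /= rmorphXn -wd mulfK.
have /intrP [k hk] := Cint_rat_Aint wq hw.
have hka : k * d%:R = a ^+ s.
  apply: (@intr_inj algC); rewrite rmorphM rmorphXn /= -hk -wd hk; congr (_ * _); rewrite ?rmorph_nat ?natz ?intz //.
have dv : (d %| `|a| ^ s)%N by rewrite -abszX -hka abszM natz absz_nat dvdn_mull.
have := coprimeXl s cop; rewrite /coprime (gcdn_idPr dv); lia.
Qed.
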